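(* Let $\Omega\subset\mathbb{R}^d$ be Borel, $p>1$, $c$ a metric on $\Omega$, $\mathcal A\subset\mathcal P^c_p(\Omega)$, and let $\delta=W_p^c$ on $\mathcal A$. Assume (i) for all $a_0,a_1\in\mathcal A$ the optimal transport problem $\inf_{\gamma\in\Pi(a_0,a_1)}\int c(x,y)^p\,d\gamma$ has at least one minimizer, the set of minimizers being denoted $\Gamma^*_{a_0,a_1}$; and (ii) $\mathcal M(\mathcal A)$ is identifiable. Let $\Gamma(\mathcal A)$ be an admissible set of atom transport plans and $\Gamma_{\mathcal M}(\mathcal A)$ the set of its finite mixtures. Let $\mu_0=\sum_{j=1}^J\lambda_0^ja_0^j$ and $\mu_1=\sum_{k=1}^K\lambda_1^ka_1^k$ be in $\mathcal M(\mathcal A)$ and define $$\widetilde\delta_{\mathcal M,p}(\mu_0,\mu_1)=\Big(\inf_{\gamma\in\Pi(\mu_0,\mu_1)\cap\Gamma_{\mathcal M}(\mathcal A)}\int_{\Omega\times\Omega}c(x,y)^p\,d\gamma(x,y)\Big)^{1/p}.$$ Then $\widetilde\delta_{\mathcal M,p}(\mu_0,\mu_1)=\delta_{\mathcal M,p}(\mu_0,\mu_1)$. Moreover, the set of minimizers of the problem defining $\widetilde\delta_{\mathcal M,p}(\mu_0,\mu_1)$ is equal to the set of measures of the form $\gamma=\sum_{j=1}^J\sum_{k=1}^K w^*_{jk}\gamma_{jk}$ where $w^*$ is a minimizer of the discrete problem defining $\delta_{\mathcal M,p}(\mu_0,\mu_1)$ and $\gamma_{jk}\in\Gamma^*_{a_0^j,a_1^k}$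 for all $j,k$.
   Context: $\mathcal P^c_p(\Omega)$ is the set of probability measures $\mu$ on $\Omega$ with $\int c(x,x_0)^pd\mu(x)<\infty$ for some $x_0$. $\Pi(\mu,\nu)$ is the set of probability measures on $\Omega\times\Omega$ with marginals $\mu,\nu$, and $W_p^c(\mu,\nu)=(\inf_{\gamma\in\Pi(\mu,\nu)}\int c^p d\gamma)^{1/p}$. $\mathcal L_K$ is the probability simplex in $\mathbb{R}^K$. $\mathcal M(\mathcal A)$ is the set of finite mixtures $\sum_{k=1}^K\lambda^ka^k$, $a^k\in\mathcal A$, $(\lambda^k)\in\mathcal L_K$. For such $\mu_0,\mu_1$, $\delta_{\mathcal M,p}(\mu_0,\mu_1)^p=\min_{w}\sum_{j,k}w_{jk}W_p^c(a_0^j,a_1^k)^p$ over $w\in\mathbb{R}_+^{J\times K}$ with row sums $\lambda_0^j$ and column sums $\lambda_1^k$. Identifiability: whenever $\sum_{j=1}^J\lambda_0^ja_0^j=\sum_{k=1}^K\lambda_1^ka_1^k$ with the $a_0^j$ pairwise distinct and the $a_1^k$ pairwise distinct, then $J=K$ and after reordering $\lambda_0^k=\lambda_1^k$, $a_0^k=a_1^k$ for all $k$. An admissible set of atom transport plans is a set $\Gamma(\mathcal A)=\bigcup_{a_0,a_1\in\mathcal A}\Gamma_{a_0,a_1}\subset\mathcal P(\Omega\times\Omega)$ where each $\Gamma_{a_0,a_1}$ is a convex set with $\Gamma^*_{a_0,a_1}\subset\Gamma_{a_0,a_1}\subset\Pi(a_0,a_1)$. $\Gamma_{\mathcal M}(\mathcal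 A)$ is the set of measures $\sum_{k=1}^K\lambda^k\gamma^k$ with $K\in\mathbb{N}^*$, $\gamma^k\in\Gamma(\mathcal A)$, $(\lambda^k)\in\mathcal L_K$. *)

(* Defs.v *)
From HB Require Import structures.
From mathcomp Require Import all_boot all_order all_algebra.
From mathcomp Require Import all_classical all_reals all_analysis.
Import numFieldTopology.Exports numFieldNormedType.Exports.
Import Order.TTheory GRing.Theory Num.Theory.

Set Implicit Arguments.
Unset Strict Implicit.
Unset Printing Implicit Defensive.

Local Open Scope classical_set_scope.
Local Open Scope ring_scope.

Definition Rd (R : realType) (d : nat) :=
  g_sigma_algebraType (open : set (set 'rV[R]_d)).

Section OTmixtures.
Context {R : realType} {dT : measure_display} {T : measurableType dT}.

Definition meq {d' : measure_display} {U : measurableType d'}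
  (mu nu : set U -> \bar R) : Prop :=
  forall A, measurable A -> mu A = nu A.

Definition simplex (K : nat) (lam : 'I_K -> R) : Prop :=
  (forall k, 0 <= lam k) /\ \sum_(k < K) lam k = 1.

Definition mix {d' : measure_display} {U : measurableType d'} (K : nat)
  (lam : 'I_K -> R) (a : 'I_K -> set U -> \bar R) : set U -> \bar R :=
  fun A => (\sum_(k < K) (lam k)%:E * a k A)%E.

Definition prob_on (Omega : set T) (mu : probability T R) : Prop :=
  mu (~` Omega) = 0%E.

Definition Pcp (Omega : set T) (c : T -> T -> R) (p : R)
  (mu : probability T R) : Prop :=
  prob_on Omega mu /\
  exists x0, Omega x0 /\
    (\int[mu]_(x in Omega) ((c x x0) `^ p)%:E < +oo)%E.

Definition couplings (Omega : set T) (mu nu : set T -> \bar R) :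
  set (probability (T * T)%type R) :=
  [set g | g (~` (Omega `*` Omega)) = 0%E /\
     forall A, measurable A ->
       g (A `*` setT) = mu A /\ g (setT `*` A) = nu A].

Definition cost (Omega : set T) (c : T -> T -> R) (p : R)
  (g : probability (T * T)%type R) : \bar R :=
  (\int[g]_(z in Omega `*` Omega) ((c z.1 z.2) `^ p)%:E)%E.

Definition Wpp (Omega : set T) (c : T -> T -> R) (p : R)
  (mu nu : set T -> \bar R) : \bar R :=
  ereal_inf [set cost Omega c p g | g in couplings Omega mu nu].

Definition Wp (Omega : set T) (c : T -> T -> R) (p : R)
  (mu nu : set T -> \bar R) : \bar R :=
  (Wpp Omega c p mu nu `^ p^-1)%E.

Definition opt_plans (Omega : set T) (c : T -> T -> R) (p : R)
  (a0 a1 : set T -> \bar R) : set (probability (T * T)%type R) :=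
  [set g | couplings Omega a0 a1 g /\ cost Omega c p g = Wpp Omega c p a0 a1].

Definition identifiable (Aset : set (probability T R)) : Prop :=
  forall (J K : nat) (l0 : 'I_J -> R) (a0 : 'I_J -> probability T R)
         (l1 : 'I_K -> R) (a1 : 'I_K -> probability T R),
    simplex l0 -> (forall j, 0 < l0 j) ->
    simplex l1 -> (forall k, 0 < l1 k) ->
    (forall j, Aset (a0 j)) -> (forall k, Aset (a1 k)) ->
    (forall i j, i != j -> ~ meq (a0 i) (a0 j)) ->
    (forall i j, i != j -> ~ meq (a1 i) (a1 j)) ->
    meq (mix l0 (fun j => a0 j : set T -> \bar R))
        (mix l1 (fun k => a1 k : set T -> \bar R)) ->
    J = K /\
    exists s : 'I_J -> 'I_K, bijective s /\
      forall j, l0 j = l1 (s j) /\ meq (a0 j) (a1 (s j)).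

(** a convex set of probability measures (convex combinations taken as
    measures, i.e. up to equality on measurable sets) *)
Definition convex_set {d' : measure_display} {U : measurableType d'}
  (S : set (probability U R)) : Prop :=
  forall (g1 g2 : probability U R) (t : R), S g1 -> S g2 -> 0 <= t <= 1 ->
    forall g : probability U R,
      meq g (fun A => (t%:E * g1 A + (1 - t)%:E * g2 A)%E) -> S g.

(** admissible set of atom transport plans: the family
    (Gamma_{a0,a1})_{a0,a1 in A}; Gamma(A) is their union *)
Definition admissible (Omega : set T) (c : T -> T -> R) (p : R)
  (Aset : set (probability T R))
  (G : probability T R -> probability T R -> set (probability (T * T)%type R))
  : Prop :=
  forall a0 a1, Aset a0 -> Aset a1 ->
    [/\ convex_set (G a0 a1),
        opt_plans Omega c p a0 a1 `<=` G a0 a1 &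
        G a0 a1 `<=` couplings Omega a0 a1].

Definition Gamma_A (Aset : set (probability T R))
  (G : probability T R -> probability T R -> set (probability (T * T)%type R))
  : set (probability (T * T)%type R) :=
  [set g | exists a0 a1, [/\ Aset a0, Aset a1 & G a0 a1 g]].

Definition Gamma_M (Aset : set (probability T R))
  (G : probability T R -> probability T R -> set (probability (T * T)%type R))
  : set (probability (T * T)%type R) :=
  [set g | exists (L : nat) (nu : 'I_L -> R)
                  (gs : 'I_L -> probability (T * T)%type R),
     [/\ simplex nu, (forall l, Gamma_A Aset G (gs l)) &
         meq g (mix nu (fun l => gs l : set (T * T) -> \bar R))]].

Definition dtilde_pp (Omega : set T) (c : T -> T -> R) (p : R)
  (Aset : set (probability T R))
  (G : probability T R -> probability T R -> set (probability (T * T)%type R))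
  (mu0 mu1 : set T -> \bar R) : \bar R :=
  ereal_inf [set cost Omega c p g | g in
               couplings Omega mu0 mu1 `&` Gamma_M Aset G].

Definition dtilde (Omega : set T) (c : T -> T -> R) (p : R)
  (Aset : set (probability T R))
  (G : probability T R -> probability T R -> set (probability (T * T)%type R))
  (mu0 mu1 : set T -> \bar R) : \bar R :=
  (dtilde_pp Omega c p Aset G mu0 mu1 `^ p^-1)%E.

Definition disc_feasible (J K : nat) (l0 : 'I_J -> R) (l1 : 'I_K -> R)
  (w : 'M[R]_(J, K)) : Prop :=
  [/\ forall j k, 0 <= w j k,
      forall j, \sum_(k < K) w j k = l0 j &
      forall k, \sum_(j < J) w j k = l1 k].

Definition disc_obj (Omega : set T) (c : T -> T -> R) (p : R) (J K : nat)
  (a0 : 'I_J -> probability T R) (a1 : 'I_K -> probability T R)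
  (w : 'M[R]_(J, K)) : \bar R :=
  (\sum_(j < J) \sum_(k < K)
     (w j k)%:E * (Wp Omega c p (a0 j) (a1 k)) `^ p)%E.

(** delta_{M,p}(mu0,mu1)^p  (min over feasible w, written as an inf) *)
Definition dM_pp (Omega : set T) (c : T -> T -> R) (p : R) (J K : nat)
  (l0 : 'I_J -> R) (a0 : 'I_J -> probability T R)
  (l1 : 'I_K -> R) (a1 : 'I_K -> probability T R) : \bar R :=
  ereal_inf [set disc_obj Omega c p a0 a1 w | w in disc_feasible l0 l1].

Definition dM (Omega : set T) (c : T -> T -> R) (p : R) (J K : nat)
  (l0 : 'I_J -> R) (a0 : 'I_J -> probability T R)
  (l1 : 'I_K -> R) (a1 : 'I_K -> probability T R) : \bar R :=
  (dM_pp Omega c p l0 a0 l1 a1 `^ p^-1)%E.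

Definition disc_minimizer (Omega : set T) (c : T -> T -> R) (p : R)
  (J K : nat) (l0 : 'I_J -> R) (a0 : 'I_J -> probability T R)
  (l1 : 'I_K -> R) (a1 : 'I_K -> probability T R) (w : 'M[R]_(J, K)) : Prop :=
  disc_feasible l0 l1 w /\
  disc_obj Omega c p a0 a1 w = dM_pp Omega c p l0 a0 l1 a1.

Definition dtilde_minimizer (Omega : set T) (c : T -> T -> R) (p : R)
  (Aset : set (probability T R))
  (G : probability T R -> probability T R -> set (probability (T * T)%type R))
  (mu0 mu1 : set T -> \bar R) (g : probability (T * T)%type R) : Prop :=
  [/\ couplings Omega mu0 mu1 g, Gamma_M Aset G g &
      cost Omega c p g = dtilde_pp Omega c p Aset G mu0 mu1].

End OTmixtures.

Definition metric_on {T : Type} {R : realType} (Omega : set T)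
  (c : T -> T -> R) : Prop :=
  [/\ forall x y, Omega x -> Omega y -> (c x y = 0 <-> x = y),
      forall x y, Omega x -> Omega y -> c x y = c y x &
      forall x y z, Omega x -> Omega y -> Omega z -> c x z <= c x y + c y z].

(* Main.v *)
Require Import Defs.
From HB Require Import structures.
From mathcomp Require Import all_boot all_order all_algebra.
From mathcomp Require Import all_classical all_reals all_analysis.
From mathcomp Require Import measurable_realfun.
From mathcomp Require Import ring lra.
Import numFieldTopology.Exports numFieldNormedType.Exports.
Import Order.TTheory GRing.Theory Num.Theory.
Set Implicit Arguments.
Unset Strict Implicit.
Unset Printing Implicit Defensive.
Local Open Scope classical_set_scope.
Local Open Scope ring_scope.

Section Mixture.
Local Open Scope ereal_scope.
Context {R : realType} {dU : measure_display} {U : measurableType dU}.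

Fixpoint mixs (I : Type) (t : I -> {nonneg R}) (P : I -> probability U R)
  (s : seq I) : {measure set U -> \bar R} :=
  match s with
  | [::] => mzero
  | i :: s' => measure_add (mscale (t i) (P i)) (mixs t P s')
  end.

Lemma mixsE (I : Type) (t : I -> {nonneg R}) (P : I -> probability U R) s A :
  mixs t P s A = \sum_(i <- s) (t i)%:num%:E * P i A.
Proof.
elim: s => [|i s IH] /=; first by rewrite big_nil.
by rewrite /= /msum 2!big_ord_recl big_ord0 adde0 big_cons IH.
Qed.

Lemma integral_mixs (I : Type) (t : I -> {nonneg R}) (P : I -> probability U R)
  (s : seq I) (D : set U) (f : U -> \bar R) : measurable D -> (forall x, D x -> 0 <= f x) ->
  measurable_fun D f ->
  \int[mixs t P s]_(x in D) f x = \sum_(i <- s) (t i)%:num%:E * \int[P i]_(x in D) f x.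
Proof.
move=> mD f0 mf; elim: s => [|i s IH] /=.
  by rewrite big_nil integral_measure_zero.
by rewrite ge0_integral_measure_add // big_cons IH ge0_integral_mscale.
Qed.

Section MixP.
Variables (I : finType) (t : I -> R) (t0 : forall i, (0 <= t i)%R)
  (P : I -> probability U R).

Definition tnn i : {nonneg R} := NngNum (t0 i).

Definition mixp A := mixs tnn P (index_enum I) A.

Let mixp0 : mixp set0 = 0. Proof. exact: measure0. Qed.
Let mixp_ge0 A : 0 <= mixp A. Proof. exact: measure_ge0. Qed.
Let mixp_sa : semi_sigma_additive mixp.
Proof. exact: measure_semi_sigma_additive. Qed.

HB.instance Definition _ := isMeasure.Build _ _ _ mixp mixp0 mixp_ge0 mixp_sa.

Lemma mixpE A : mixp A = \sum_i (t i)%:E * P i A.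
Proof. by rewrite /mixp mixsE. Qed.

Lemma mixp_setT (t1 : (\sum_i t i)%R = 1%R) : mixp setT = 1.
Proof.
rewrite mixpE (eq_bigr (fun i => (t i)%:E)); last by move=> i _; rewrite probability_setT mule1.
by rewrite sumEFin t1.
Qed.


End MixP.

Lemma mix_exists (I : finType) (t : I -> R) (P : I -> probability U R) :
  (forall i, (0 <= t i)%R) -> (\sum_i t i)%R = 1%R ->
  exists g : probability U R, forall A, g A = \sum_i (t i)%:E * P i A.
Proof.
move=> t0 t1.
exists (HB.pack_for (probability U R) (mixp t0 P)
  (Measure_isProbability.Build _ _ _ (mixp t0 P) (mixp_setT t0 P t1))).
move=> A; exact: mixpE.
Qed.

Lemma integral_mix (I : finType) (t : I -> R) (P : I -> probability U R)
  (g : {measure set U -> \bar R}) D (f : U -> \bar R) :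
  (forall i, (0 <= t i)%R) ->
  meq g (fun A => \sum_i (t i)%:E * P i A) ->
  measurable D -> (forall x, D x -> 0 <= f x) -> measurable_fun D f ->
  \int[g]_(x in D) f x = \sum_i (t i)%:E * \int[P i]_(x in D) f x.
Proof.
move=> t0 gE mD f0 mf.
rewrite (eq_measure_integral (mixs (tnn t0) P (index_enum I))); last first.
  by move=> A mA _; rewrite gE // mixsE.
by rewrite integral_mixs.
Qed.

End Mixture.

Section Basics.
Local Open Scope ereal_scope.
Context {R : realType} {dT : measure_display} {T : measurableType dT}.
Variables (Omega : set T) (c : T -> T -> R) (p : R).

Lemma couplings_meq (mu mu' nu nu' : set T -> \bar R) g :
  meq mu mu' -> meq nu nu' ->
  couplings Omega mu nu g -> couplings Omega mu' nu' g.
Proof.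
move=> e1 e2 [h0 h1]; split => // A mA; have [-> ->] := h1 A mA.
by rewrite e1 // e2.
Qed.

Lemma Wpp_meq (mu mu' nu nu' : set T -> \bar R) :
  meq mu mu' -> meq nu nu' -> Wpp Omega c p mu nu = Wpp Omega c p mu' nu'.
Proof.
move=> e1 e2; rewrite /Wpp; congr ereal_inf; apply/seteqP; split => x [g Hg <-];
  exists g => //.
  exact: couplings_meq Hg.
by apply: couplings_meq Hg => A mA; [rewrite e1|rewrite e2].
Qed.

Lemma opt_meq (mu mu' nu nu' : set T -> \bar R) g :
  meq mu mu' -> meq nu nu' ->
  opt_plans Omega c p mu nu g -> opt_plans Omega c p mu' nu' g.
Proof.
move=> e1 e2 [h1 h2]; split; first exact: couplings_meq h1.
by rewrite h2; apply: Wpp_meq.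
Qed.

Lemma cost_ge0 g : 0 <= cost Omega c p g.
Proof. by apply: integral_ge0 => z _; rewrite lee_fin powR_ge0. Qed.

Lemma Wpp_ge0 (mu nu : set T -> \bar R) : 0 <= Wpp Omega c p mu nu.
Proof. by apply/ereal_infP => y [g _ <-]; exact: cost_ge0. Qed.

Hypothesis mO : measurable Omega.
Hypothesis mc : measurable_fun (Omega `*` Omega) (fun z : T * T => c z.1 z.2).

Lemma mcost : measurable_fun (Omega `*` Omega)
  (fun z : T * T => ((c z.1 z.2) `^ p)%:E).
Proof.
apply/measurable_EFinP.
exact: (measurableT_comp (measurable_powR p) mc).
Qed.

Lemma cost_mix (I : finType) (t : I -> R) (P : I -> probability (T * T)%type R)
  (g : probability (T * T)%type R) :
  (forall i, (0 <= t i)%R) ->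
  meq g (fun A => \sum_i (t i)%:E * P i A) ->
  cost Omega c p g = \sum_i (t i)%:E * cost Omega c p (P i).
Proof.
move=> t0 gE; rewrite /cost (integral_mix t0 gE) //.
- exact: measurableX.
- by move=> z _; rewrite lee_fin powR_ge0.
- exact: mcost.
Qed.

Lemma mix_couplings (I : finType) (t : I -> R)
  (P : I -> probability (T * T)%type R) (a b : I -> set T -> \bar R)
  (g : probability (T * T)%type R) :
  (forall i, (0 <= t i)%R) ->
  (forall i, (0 < t i)%R -> couplings Omega (a i) (b i) (P i)) ->
  meq g (fun A => \sum_i (t i)%:E * P i A) ->
  couplings Omega (fun A => \sum_i (t i)%:E * a i A)
                  (fun A => \sum_i (t i)%:E * b i A) g.
Proof.
move=> t0 hP gE; split.
  rewrite gE; last by apply: measurableC; exact: measurableX.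
  apply: big1 => i _; have := t0 i; rewrite le_eqVlt => /orP[/eqP <-|/hP [-> _]].
    by rewrite mul0e.
  by rewrite mule0.
move=> A mA; split.
  rewrite gE; last by apply: measurableX.
  apply: eq_bigr => i _; have := t0 i; rewrite le_eqVlt => /orP[/eqP <-|/hP [_ h]].
    by rewrite !mul0e.
  by rewrite (h A mA).1.
rewrite gE; last by apply: measurableX.
apply: eq_bigr => i _; have := t0 i; rewrite le_eqVlt => /orP[/eqP <-|/hP [_ h]].
  by rewrite !mul0e.
by rewrite (h A mA).2.
Qed.

Lemma sum_const_prob (I : finType) (t : I -> R) (x : \bar R) :
  (forall i, (0 <= t i)%R) -> (\sum_i t i)%R = 1%R ->
  \sum_i (t i)%:E * x = x.
Proof.
move=> t0 t1; rewrite -ge0_sume_distrl; last by move=> i _; rewrite lee_fin.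
by rewrite sumEFin t1 mul1e.
Qed.

Lemma mix_opt (I : finType) (t : I -> R)
  (P : I -> probability (T * T)%type R) (a b : probability T R)
  (g : probability (T * T)%type R) :
  (forall i, (0 <= t i)%R) -> (\sum_i t i)%R = 1%R ->
  (forall i, (0 < t i)%R -> opt_plans Omega c p a b (P i)) ->
  meq g (fun A => \sum_i (t i)%:E * P i A) ->
  opt_plans Omega c p a b g.
Proof.
move=> t0 t1 hP gE; split.
  apply: (@couplings_meq (fun A => \sum_i (t i)%:E * a A)
                         _ (fun A => \sum_i (t i)%:E * b A)).
  - by move=> A _; rewrite sum_const_prob.
  - by move=> A _; rewrite sum_const_prob.
  by apply: (mix_couplings t0 _ gE) => i /hP [].
rewrite (cost_mix t0 gE) -[RHS](sum_const_prob _ t0 t1).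
apply: eq_bigr => i _; have := t0 i; rewrite le_eqVlt => /orP[/eqP <-|/hP [_ ->]] //.
by rewrite !mul0e.
Qed.

End Basics.

Lemma powR_sum3 {R : realType} (p x u v w : R) : (0 <= p)%R ->
  (0 <= u)%R -> (0 <= v)%R -> (0 <= w)%R -> (0 <= x)%R -> (x <= u + v + w)%R ->
  (x `^ p <= 3 `^ p * (u `^ p + v `^ p + w `^ p))%R.
Proof.
move=> p0 u0 v0 w0 x0 hx.
have [M [HM [uM [vM wM]]]] : exists M : R,
    (M = u \/ M = v \/ M = w) /\ (u <= M /\ v <= M /\ w <= M)%R.
  case: (lerP u v) => uv; case: (lerP v w) => vw; case: (lerP u w) => uw.
  - exists w; split; [by right; right|split; [lra|split; lra]].
  - exists w; split; [by right; right|split; [lra|split; lra]].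
  - exists v; split; [by right; left|split; [lra|split; lra]].
  - exists v; split; [by right; left|split; [lra|split; lra]].
  - exists w; split; [by right; right|split; [lra|split; lra]].
  - exists u; split; [by left|split; [lra|split; lra]].
  - exists u; split; [by left|split; [lra|split; lra]].
  - exists u; split; [by left|split; [lra|split; lra]].
have M0 : (0 <= M)%R by lra.
have h1 : (x `^ p <= (3 * M) `^ p)%R.
  by apply: ge0_ler_powR => //; rewrite ?nnegrE //; lra.
apply: (le_trans h1); rewrite powRM //; apply: ler_wpM2l; first exact: powR_ge0.
have := powR_ge0 u p; have := powR_ge0 v p; have := powR_ge0 w p.
case: HM => [->|[->|->]]; lra.
Qed.

Section Finite.
Local Open Scope ereal_scope.
Context {R : realType} {dT : measure_display} {T : measurableType dT}.
Variables (Omega : set T) (c : T -> T -> R) (p : R).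
Hypothesis mO : measurable Omega.
Hypothesis mc : measurable_fun (Omega `*` Omega) (fun z : T * T => c z.1 z.2).
Hypothesis hmet : metric_on Omega c.
Hypothesis p0 : (0 <= p)%R.

Lemma c_ge0 x y : Omega x -> Omega y -> (0 <= c x y)%R.
Proof.
case: hmet => h0 hs ht Ox Oy.
have := ht x y x Ox Oy Ox; rewrite (proj2 (h0 x x Ox Ox) erefl) hs //; lra.
Qed.

Lemma sec_meas x0 : Omega x0 ->
  measurable_fun Omega (fun x => ((c x x0) `^ p)%:E).
Proof.
move=> Ox0.
have -> : (fun x => ((c x x0) `^ p)%:E) =
  (fun z : T * T => ((c z.1 z.2) `^ p)%:E) \o (fun x => (x, x0)) by [].
apply: (measurable_comp (F := Omega `*` Omega)).
- exact: measurableX.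
- by move=> z [x Ox <-].
- exact: mcost.
by apply: (measurable_funS measurableT) => //.
Qed.

Lemma integral_fst (g : probability (T * T)%type R) (a : set T -> \bar R)
  (f : T -> \bar R) :
  (forall A, measurable A -> g (A `*` setT) = a A) ->
  measurable_fun Omega f -> (forall x, Omega x -> 0 <= f x) ->
  \int[g]_(z in Omega `*` Omega) f z.1 <= \int[pushforward g fst]_(x in Omega) f x.
Proof.
move=> ga mf f0.
have E : fst @^-1` Omega = Omega `*` setT :> set (T * T).
  by apply/seteqP; split => z /=; [move=> h; split|case].
have mfst : measurable_fun (Omega `*` [set: T]) (f \o fst).
  apply: (measurable_comp (F := Omega)) => //; first by move=> _ [z [Oz _] <-].
  exact: (measurable_funS measurableT).
rewrite ge0_integral_pushforward //; last by move=> x; rewrite inE; apply: f0.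
rewrite E; apply: ge0_subset_integral => //.
- exact: measurableX.
- exact: measurableX.
- by move=> z [Oz _]; apply: f0.
- by move=> z [Oz _].
Qed.

Lemma integral_snd (g : probability (T * T)%type R) (f : T -> \bar R) :
  measurable_fun Omega f -> (forall x, Omega x -> 0 <= f x) ->
  \int[g]_(z in Omega `*` Omega) f z.2 <= \int[pushforward g snd]_(x in Omega) f x.
Proof.
move=> mf f0.
have E : snd @^-1` Omega = setT `*` Omega :> set (T * T).
  by apply/seteqP; split => z /=; [move=> h; split|case].
have msnd : measurable_fun ([set: T] `*` Omega) (f \o snd).
  apply: (measurable_comp (F := Omega)) => //; first by move=> _ [z [_ Oz] <-].
  exact: (measurable_funS measurableT).
rewrite ge0_integral_pushforward //; last by move=> x; rewrite inE; apply: f0.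
rewrite E; apply: ge0_subset_integral => //.
- exact: measurableX.
- exact: measurableX.
- by move=> z [_ Oz]; apply: f0.
- by move=> z [].
Qed.

End Finite.

Section Finite2.
Local Open Scope ereal_scope.
Context {R : realType} {dT : measure_display} {T : measurableType dT}.
Variables (Omega : set T) (c : T -> T -> R) (p : R).
Hypothesis mO : measurable Omega.
Hypothesis mc : measurable_fun (Omega `*` Omega) (fun z : T * T => c z.1 z.2).
Hypothesis hmet : metric_on Omega c.
Hypothesis p0 : (0 <= p)%R.

Lemma pf_fst (g : probability (T * T)%type R) (a : probability T R) (f : T -> \bar R) :
  (forall A, measurable A -> g (A `*` setT) = a A) ->
  \int[pushforward g fst]_(x in Omega) f x = \int[a]_(x in Omega) f x.
Proof.
move=> ga; apply: eq_measure_integral => A mA _.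
apply: (eq_trans _ (ga A mA)).
change (g (fst @^-1` A) = g (A `*` setT)); congr (g _).
by apply/seteqP; split => z /=; [move=> h; split|case].
Qed.

Lemma pf_snd (g : probability (T * T)%type R) (a : probability T R) (f : T -> \bar R) :
  (forall A, measurable A -> g (setT `*` A) = a A) ->
  \int[pushforward g snd]_(x in Omega) f x = \int[a]_(x in Omega) f x.
Proof.
move=> ga; apply: eq_measure_integral => A mA _.
apply: (eq_trans _ (ga A mA)).
change (g (snd @^-1` A) = g (setT `*` A)); congr (g _).
by apply/seteqP; split => z /=; [move=> h; split|case].
Qed.

Lemma Wpp_fin (a b : probability T R) :
  Pcp Omega c p a -> Pcp Omega c p b -> Wpp Omega c p a b < +oo.
Proof.
move=> [Oa [x0 [Ox0 ha]]] [Ob [x1 [Ox1 hb]]].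
pose g : probability (T * T)%type R := (a \x b)%E.
have gX A B : measurable A -> measurable B -> g (A `*` B) = a A * b B.
  by move=> mA mB; exact: product_measure1E.
have mOO : measurable (Omega `*` Omega) by exact: measurableX.
have cg : couplings Omega a b g.
  split.
    apply/eqP; rewrite eq_le measure_ge0 andbT.
    have mC : measurable (~` Omega) by exact: measurableC.
    apply: (le_trans (y := g ((~` Omega) `*` setT `|` setT `*` (~` Omega)))).
      apply: le_measure; rewrite ?inE.
      - exact/measurableC.
      - by apply: measurableU; apply: measurableX.
      - move=> [x y] /= h; have [Ox|Ox] := pselect (Omega x).
          by right; split => // Oy; apply: h.
        by left.
    apply: (le_trans (measureU2 _ _ _)); try by apply: measurableX.
    change (g (~` Omega `*` setT) + g (setT `*` ~` Omega) <= 0).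
    rewrite !gX // Oa Ob probability_setT; rewrite mul0e mule0 adde0 //.
  move=> A mA; split; rewrite gX // probability_setT ?mule1 ?mul1e //.
apply: (le_lt_trans (y := cost Omega c p g)).
  by apply: ereal_inf_lbound; exists g.
pose f0 x := ((c x x0) `^ p)%:E.
pose f1 x := ((c x x1) `^ p)%:E.
pose K := ((c x0 x1) `^ p)%:E.
have mf0 : measurable_fun Omega f0 by exact: sec_meas.
have mf1 : measurable_fun Omega f1 by exact: sec_meas.
have f00 x : 0 <= f0 x by rewrite lee_fin powR_ge0.
have f10 x : 0 <= f1 x by rewrite lee_fin powR_ge0.
have K0 : 0 <= K by rewrite lee_fin powR_ge0.
have mfst : measurable_fun (Omega `*` Omega) (fun z : T * T => f0 z.1).
  apply: (measurable_comp (F := Omega)) => //; first by move=> _ [z [Oz _] <-].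
  exact: (measurable_funS measurableT).
have msnd : measurable_fun (Omega `*` Omega) (fun z : T * T => f1 z.2).
  apply: (measurable_comp (F := Omega)) => //; first by move=> _ [z [_ Oz] <-].
  exact: (measurable_funS measurableT).
have mK : measurable_fun (Omega `*` Omega) (fun z : T * T => K) by [].
have mS : measurable_fun (Omega `*` Omega) (fun z : T * T => f0 z.1 + K + f1 z.2).
  by apply: emeasurable_funD => //; apply: emeasurable_funD.
have h3 : measurable_fun (Omega `*` Omega)
    (fun z : T * T => (3 `^ p)%:E * (f0 z.1 + K + f1 z.2)).
  by apply: emeasurable_funM => //.
apply: (le_lt_trans (y := \int[g]_(z in Omega `*` Omega)
    ((3 `^ p)%:E * (f0 z.1 + K + f1 z.2)))).
  apply: ge0_le_integral => //.
  - by move=> z _; rewrite lee_fin powR_ge0.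
  - exact: mcost.
  move=> [x y] [/= Ox Oy]; rewrite /f0 /f1 /K -!EFinD -EFinM lee_fin.
  apply: powR_sum3 => //; try (apply: (c_ge0 hmet); assumption).
  case: hmet => _ hs ht.
  rewrite [c y x1]hs //.
  have := ht x x0 y Ox Ox0 Oy; have := ht x0 x1 y Ox0 Ox1 Oy; lra.
rewrite ge0_integralZl //; last by move=> z _; rewrite !adde_ge0.
apply: lte_mul_pinfty; [by rewrite lee_fin powR_ge0|by []|].
rewrite ge0_integralD //; last 2 first.
  - by move=> z _; rewrite adde_ge0.
  - by apply: emeasurable_funD.
rewrite ge0_integralD //.
apply: lte_add_pinfty; first apply: lte_add_pinfty.
- have gXT A : measurable A -> g (A `*` setT) = a A.
    by move=> mA; rewrite gX // probability_setT mule1.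
  apply: (le_lt_trans (integral_fst mO gXT mf0 (fun x _ => f00 x))).
  by rewrite (pf_fst _ gXT).
- rewrite integral_cst //; apply: lte_mul_pinfty => //.
  by apply: (le_lt_trans (probability_le1 _ mOO)); rewrite ltry.
- have gTX A : measurable A -> g (setT `*` A) = b A.
    by move=> mA; rewrite gX // probability_setT mul1e.
  apply: (le_lt_trans (integral_snd mO g mf1 (fun x _ => f10 x))).
  by rewrite (pf_snd _ gTX).
Qed.

End Finite2.

Lemma big_partition (V : Type) (idx : V) (op : Monoid.com_law idx)
  (I L : finType) (Q : L -> I -> bool) (F : L -> V) :
  (forall l, F l = idx \/ exists i0, forall i, Q l i = (i == i0)) ->
  \big[op/idx]_(i : I) \big[op/idx]_(l | Q l i) F l = \big[op/idx]_(l : L) F l.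
Proof.
move=> h.
under eq_bigr do rewrite big_mkcond.
rewrite exchange_big; apply: eq_bigr => l _.
case: (h l) => [->|[i0 hi0]]; first by apply: big1 => i _; case: ifP.
rewrite -big_mkcond (big_pred1 i0) //.
Qed.

Section Ident.
Local Open Scope ereal_scope.
Context {R : realType} {dT : measure_display} {T : measurableType dT}.

Lemma meq_refl (mu : set T -> \bar R) : meq mu mu.
Proof. by []. Qed.
Lemma meq_sym (mu nu : set T -> \bar R) : meq mu nu -> meq nu mu.
Proof. by move=> h A mA; rewrite h. Qed.
Lemma meq_trans (mu nu xi : set T -> \bar R) : meq mu nu -> meq nu xi -> meq mu xi.
Proof. by move=> h1 h2 A mA; rewrite h1 // h2. Qed.

Definition eqm (x y : probability T R) : bool :=
  asbool (meq (x : set T -> \bar R) (y : set T -> \bar R)).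

Lemma eqmP (x y : probability T R) : reflect (meq x y) (eqm x y).
Proof. exact: asboolP. Qed.

Lemma eqm_trans (x y z : probability T R) : eqm x y -> eqm y z -> eqm x z.
Proof. by move=> /eqmP h1 /eqmP h2; apply/eqmP; apply: meq_trans h1 h2. Qed.
Lemma eqm_sym (x y : probability T R) : eqm x y -> eqm y x.
Proof. by move=> /eqmP h1; apply/eqmP; apply: meq_sym h1. Qed.
Lemma eqm_refl (x : probability T R) : eqm x x.
Proof. by apply/eqmP. Qed.

Definition mixP n (nu : 'I_n -> R) (b : 'I_n -> probability T R) :=
  mix nu (fun l => b l : set T -> \bar R).

Lemma reduce (Aset : set (probability T R)) n (nu : 'I_n -> R)
  (b : 'I_n -> probability T R) :
  simplex nu -> (forall l, Aset (b l)) ->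
  exists m (lam : 'I_m -> R) (a : 'I_m -> probability T R),
   [/\ simplex lam, (forall i, (0 < lam i)%R), (forall i, Aset (a i)),
       (forall i j, i != j -> ~ meq (a i) (a j)) &
       meq (mixP nu b) (mixP lam a) /\
       forall x, (\sum_(l | eqm (b l) x) nu l = \sum_(i | eqm (a i) x) lam i)%R].
Proof.
move=> [nu0 nu1] hA.
pose F : pred 'I_n := fun l => (0 < nu l)%R &&
  [forall l' : 'I_n, ((l' < l)%N && (0 < nu l')%R) ==> ~~ eqm (b l') (b l)].
have K1 l : (0 < nu l)%R -> exists2 r, r \in F & eqm (b r) (b l).
  move=> hl.
  pose P : pred 'I_n := fun l' => (0 < nu l')%R && eqm (b l') (b l).
  have Pl : P l by rewrite /P hl eqm_refl.
  case: (arg_minnP (fun i : 'I_n => nat_of_ord i) Pl) => r /andP[Pr1 Pr2] rmin.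
  exists r => //; change (F r); rewrite /F Pr1 /=; apply/forallP => l'.
  apply/implyP => /andP[lr hl']; apply/negP => e.
  have : P l' by rewrite /P hl' (eqm_trans e Pr2).
  by move/rmin; rewrite leqNgt lr.
have K2 r1 r2 : r1 \in F -> r2 \in F -> eqm (b r1) (b r2) -> r1 = r2.
  move=> F1 F2 e; case: (ltngtP r1 r2) => h; last exact: val_inj.
  - have F2' : F r2 := F2; have F1' : F r1 := F1.
    move: F2'; rewrite /F => /andP[_ /forallP /(_ r1)].
    by move: F1'; rewrite /F => /andP[-> _]; rewrite h e.
  - have F2' : F r2 := F2; have F1' : F r1 := F1.
    move: F1'; rewrite /F => /andP[_ /forallP /(_ r2)].
    by move: F2'; rewrite /F => /andP[-> _]; rewrite h (eqm_sym e).
pose m := #|F|.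
pose e : 'I_m -> 'I_n := enum_val.
pose a i := b (e i).
pose lam i := (\sum_(l | eqm (b l) (a i)) nu l)%R.
have eF i : e i \in F by apply: enum_valP.
have lam_pos i : (0 < lam i)%R.
  have eF' : F (e i) := eF i.
  have /andP[h _] := eF'.
  rewrite /lam (bigD1 (e i)) /=; last exact: eqm_refl.
  by apply: ltr_wpDr => //; apply: sumr_ge0 => l _; apply: nu0.
have U i1 i2 x : eqm (a i1) x -> eqm (a i2) x -> i1 = i2.
  move=> h1 h2; apply: enum_val_inj; apply: K2 => //.
  exact: eqm_trans h1 (eqm_sym h2).
have Ex l : (0 < nu l)%R -> exists i0, forall i, eqm (b l) (a i) = (i == i0).
  move=> hl; have [r rF er] := K1 l hl.
  exists (enum_rank_in rF r) => i.
  have ar : a (enum_rank_in rF r) = b r by rewrite /a /e enum_rankK_in.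
  apply/idP/eqP => [h|->]; last by rewrite ar eqm_sym.
  by apply: (U _ _ (b l)); [exact: eqm_sym|rewrite ar].
have part (V : Type) (idx : V) (op : Monoid.com_law idx) (G : 'I_n -> V) :
    (forall l, nu l = 0%R -> G l = idx) ->
    \big[op/idx]_(i : 'I_m) \big[op/idx]_(l | eqm (b l) (a i)) G l =
    \big[op/idx]_(l : 'I_n) G l.
  move=> hG; apply: big_partition => l.
  have := nu0 l; rewrite le_eqVlt => /orP[/eqP h|/Ex h]; last by right.
  by left; apply: hG.
exists m, lam, a; split => //.
- split; first by move=> i; apply: ltW.
  by rewrite /lam part.
- by move=> i; apply: hA.
- move=> i j ij mij; move/negP: ij; apply; apply/eqP.
  by apply: (U _ _ (a j)) => //; [apply/eqmP|exact: eqm_refl].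
split.
  move=> A mA; rewrite /mixP /mix.
  rewrite -(part _ _ _ (fun l => (nu l)%:E * b l A)); last first.
    by move=> l ->; rewrite mul0e.
  apply: eq_bigr => i _; rewrite /lam -sumEFin ge0_sume_distrl; last first.
    by move=> l _; rewrite lee_fin.
  apply: eq_bigr => l /eqmP h; by rewrite h.
move=> x.
have [[i0 h0]|none] := pselect (exists i0, eqm (a i0) x).
  rewrite (big_pred1 i0); last first.
    by move=> i /=; apply/idP/eqP => [h|->] //; apply: (U _ _ x).
  rewrite /lam; apply: eq_bigl => l.
  apply/idP/idP => h; first exact: eqm_trans h (eqm_sym h0).
  exact: eqm_trans h h0.
rewrite [RHS]big1; last by move=> i h; exfalso; apply: none; exists i.
apply: big1 => l hl.
have := nu0 l; rewrite le_eqVlt => /orP[/eqP //|/Ex [i0 hi0]].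
exfalso; apply: none; exists i0.
have := hi0 i0; rewrite eqxx => h.
exact: eqm_trans (eqm_sym h) hl.
Qed.

Lemma class_weights (Aset : set (probability T R)) :
  identifiable Aset ->
  forall n1 (nu1 : 'I_n1 -> R) (b1 : 'I_n1 -> probability T R)
         n2 (nu2 : 'I_n2 -> R) (b2 : 'I_n2 -> probability T R),
  simplex nu1 -> simplex nu2 -> (forall l, Aset (b1 l)) -> (forall l, Aset (b2 l)) ->
  meq (mixP nu1 b1) (mixP nu2 b2) ->
  forall x, (\sum_(l | eqm (b1 l) x) nu1 l = \sum_(l | eqm (b2 l) x) nu2 l)%R.
Proof.
move=> hid n1 nu1 b1 n2 nu2 b2 s1 s2 A1 A2 e12 x.
have [m1 [lam1 [a1 [sl1 pl1 Aa1 d1 [e1 w1]]]]] := reduce s1 A1.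
have [m2 [lam2 [a2 [sl2 pl2 Aa2 d2 [e2 w2]]]]] := reduce s2 A2.
have e : meq (mixP lam1 a1) (mixP lam2 a2).
  apply: meq_trans (meq_sym e1) _; apply: meq_trans e12 e2.
have [_ [s [sb hs]]] := hid _ _ _ _ _ _ sl1 pl1 sl2 pl2 Aa1 Aa2 d1 d2 e.
rewrite w1 w2 (reindex s); last exact: onW_bij.
apply: eq_big => i; last by move=> _; rewrite (hs i).1.
have [_ /eqmP h] := hs i.
apply/idP/idP => hh.
  exact: eqm_trans (eqm_sym h) hh.
exact: eqm_trans h hh.
Qed.

End Ident.

Section Helpers.
Context {R : realType}.

Lemma sum_indic (I : finType) (P : pred I) (F : I -> R) :
  (\sum_i (P i)%:R * F i = \sum_(i | P i) F i)%R.
Proof.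
rewrite [RHS]big_mkcond; apply: eq_bigr => i _.
by case: (P i); rewrite ?mul1r ?mul0r.
Qed.

Lemma sum_eq_termwise (I : finType) (x y : I -> \bar R) :
  (forall i, (0 <= x i)%E) -> (forall i, (x i <= y i)%E) ->
  (\sum_i y i < +oo)%E -> (\sum_i y i <= \sum_i x i)%E -> forall i, x i = y i.
Proof.
move=> x0 xy yfin yx i; apply/eqP; rewrite eq_le xy /= leNgt; apply/negP => lt.
have y0 j : (0 <= y j)%E by apply: le_trans (xy j).
have : (\sum_i x i < \sum_i y i)%E.
  rewrite (bigD1 i) //= [X in (_ < X)%E](bigD1 i) //=.
  apply: lte_leD => //; last by apply: lee_sum => j _.
  rewrite ge0_fin_numE; last by apply: sume_ge0.
  apply: (le_lt_trans _ yfin); apply: (le_trans (y := \sum_(j | j != i) y j)%E).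
    by apply: lee_sum => j _.
  by rewrite [X in (_ <= X)%E](bigD1 i) //= leeDr.
by rewrite ltNge yx.
Qed.

Lemma EFin_cancel (r : R) (x y : \bar R) : (0 < r)%R ->
  (r%:E * x = r%:E * y)%E -> x = y.
Proof.
move=> r0 e; have := congr1 (fun z => (r^-1%:E * z)%E) e.
by rewrite !muleA -!EFinM mulVf ?mul1e // lt0r_neq0.
Qed.

End Helpers.

Section Main.
Local Open Scope ereal_scope.
Context {R : realType} {dT : measure_display} {T : measurableType dT}.
Variables (Omega : set T) (p : R) (c : T -> T -> R)
  (Aset : set (probability T R))
  (G : probability T R -> probability T R -> set (probability (T * T)%type R))
  (J K : nat) (l0 : 'I_J -> R) (a0 : 'I_J -> probability T R)
  (l1 : 'I_K -> R) (a1 : 'I_K -> probability T R).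
Hypotheses (mO : measurable Omega) (p1 : (1 < p)%R) (hmet : metric_on Omega c)
  (mc : measurable_fun (Omega `*` Omega) (fun z : T * T => c z.1 z.2))
  (hP : Aset `<=` Pcp Omega c p)
  (hopt : forall b0 b1, Aset b0 -> Aset b1 -> exists g, opt_plans Omega c p b0 b1 g)
  (hid : identifiable Aset) (hadm : admissible Omega c p Aset G)
  (s0 : simplex l0) (A0 : forall j, Aset (a0 j))
  (s1 : simplex l1) (A1 : forall k, Aset (a1 k)).

Let mu0 := mix l0 (fun j => a0 j : set T -> \bar R).
Let mu1 := mix l1 (fun k => a1 k : set T -> \bar R).

Lemma Wp_pow (a b : set T -> \bar R) :
  (Wp Omega c p a b) `^ p = Wpp Omega c p a b.
Proof.
rewrite /Wp -poweRrM mulVf ?poweRe1 //; first exact: Wpp_ge0.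
by apply: lt0r_neq0; have := p1; lra.
Qed.

Lemma gammaM_fin (I : finType) (t : I -> R) (P : I -> probability (T * T)%type R)
  (g : probability (T * T)%type R) :
  (forall i, (0 <= t i)%R) -> (\sum_i t i)%R = 1%R ->
  (forall i, Gamma_A Aset G (P i)) ->
  meq g (fun A => \sum_i (t i)%:E * P i A) -> Gamma_M Aset G g.
Proof.
move=> t0 t1 hG gE.
exists #|I|, (fun l => t (enum_val l)), (fun l => P (enum_val l)); split.
- split => [l|]; first exact: t0.
  by rewrite -t1 [RHS](reindex (fun l : 'I_#|I| => enum_val l)) //; apply: onW_bij; apply: enum_val_bij.
- by move=> l; apply: hG.
- move=> A mA; rewrite gE // /mix [LHS](reindex (fun l : 'I_#|I| => enum_val l)) //.
  by apply: onW_bij; apply: enum_val_bij.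
Qed.


Lemma plan_from (w : 'M[R]_(J, K)) (gs : 'I_J -> 'I_K -> probability (T * T)%type R)
  (g : probability (T * T)%type R) :
  disc_feasible l0 l1 w ->
  (forall j k, opt_plans Omega c p (a0 j) (a1 k) (gs j k)) ->
  meq g (fun A => \sum_(j < J) \sum_(k < K) (w j k)%:E * gs j k A) ->
  [/\ couplings Omega mu0 mu1 g, Gamma_M Aset G g &
      cost Omega c p g = disc_obj Omega c p a0 a1 w].
Proof.
move=> [w0 wr wc] hgs gE.
have gE' : meq g (fun A => \sum_(q : 'I_J * 'I_K) (w q.1 q.2)%:E * gs q.1 q.2 A).
  by move=> A mA; rewrite gE // pair_bigA.
have t0 : forall q : 'I_J * 'I_K, (0 <= w q.1 q.2)%R by move=> q; apply: w0.
have t1 : (\sum_(q : 'I_J * 'I_K) w q.1 q.2)%R = 1%R.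
  by rewrite -pair_bigA /= -s0.2; apply: eq_bigr => j _; rewrite wr.
split.
- have hc := mix_couplings (a := fun q => a0 q.1 : set T -> \bar R)
      (b := fun q => a1 q.2 : set T -> \bar R) mO t0
      (fun q _ => (hgs q.1 q.2).1) gE'.
  apply: (couplings_meq _ _ hc).
  + move=> A mA; rewrite /= -(pair_bigA _ (fun j k => (w j k)%:E * a0 j A)) /= /mu0 /mix; apply: eq_bigr => j _.
    rewrite -ge0_sume_distrl; last by move=> k _; rewrite lee_fin.
    by rewrite sumEFin wr.
  + move=> A mA; rewrite /= -(pair_bigA _ (fun j k => (w j k)%:E * a1 k A)) /= exchange_big /mu1 /mix; apply: eq_bigr => k _.
    rewrite -ge0_sume_distrl; last by move=> j _; rewrite lee_fin.
    by rewrite sumEFin wc.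
- apply: (gammaM_fin t0 t1 _ gE') => q.
  exists (a0 q.1), (a1 q.2); split => //.
  by have [_ hsub _] := hadm (A0 q.1) (A1 q.2); apply: hsub.
- rewrite (cost_mix p mO mc t0 gE') /disc_obj
    -(pair_bigA _ (fun j k => (w j k)%:E * cost Omega c p (gs j k))); apply: eq_bigr => j _.
  by apply: eq_bigr => k _; rewrite Wp_pow (hgs j k).2.
Qed.

Lemma upper (w : 'M[R]_(J, K)) : disc_feasible l0 l1 w ->
  exists g, [/\ couplings Omega mu0 mu1 g, Gamma_M Aset G g &
      cost Omega c p g = disc_obj Omega c p a0 a1 w].
Proof.
move=> hw.
have H : forall q : 'I_J * 'I_K,
    exists g, opt_plans Omega c p (a0 q.1) (a1 q.2) g by move=> q; apply: hopt.
have [f hf] := choice H.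
have [w0 wr _] := hw.
have t0 : forall q : 'I_J * 'I_K, (0 <= w q.1 q.2)%R by move=> q; apply: w0.
have t1 : (\sum_(q : 'I_J * 'I_K) w q.1 q.2)%R = 1%R.
  by rewrite -pair_bigA /= -s0.2; apply: eq_bigr => j _; rewrite wr.
have [g hg] := mix_exists f t0 t1.
exists g; apply: (plan_from (gs := fun j k => f (j, k)) hw).
  by move=> j k; apply: (hf (j, k)).
by move=> A mA; rewrite hg pair_bigA; apply: eq_bigr => -[j k] _.
Qed.

Lemma decompose (g : probability (T * T)%type R) :
  couplings Omega mu0 mu1 g -> Gamma_M Aset G g ->
  exists w : 'M[R]_(J, K),
    [/\ disc_feasible l0 l1 w, disc_obj Omega c p a0 a1 w <= cost Omega c p g &
      (cost Omega c p g <= disc_obj Omega c p a0 a1 w -> cost Omega c p g < +oo ->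
       exists gs : 'I_J -> 'I_K -> probability (T * T)%type R,
         (forall j k, opt_plans Omega c p (a0 j) (a1 k) (gs j k)) /\
         meq g (fun A => \sum_(j < J) \sum_(k < K) (w j k)%:E * gs j k A))].
Proof.
move=> [g0 gm] [L [nu [ga [snu hGA gE]]]].
have HB : forall l, exists bb : probability T R * probability T R,
    [/\ Aset bb.1, Aset bb.2 & G bb.1 bb.2 (ga l)].
  by move=> l; have [x [y [hx hy hg]]] := hGA l; exists (x, y).
have [bb hbb] := choice HB.
pose b0 l := (bb l).1; pose b1 l := (bb l).2.
have Ab0 l : Aset (b0 l) by case: (hbb l).
have Ab1 l : Aset (b1 l) by case: (hbb l).
have cga l : couplings Omega (b0 l) (b1 l) (ga l).
  by have [_ _ hs] := hadm (Ab0 l) (Ab1 l); apply: hs; case: (hbb l).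
have [nu0 nu1] := snu.
have m0 : meq (mixP nu b0) (mixP l0 a0).
  move=> A mA; rewrite /mixP -/mu0 -(gm A mA).1 gE; last exact: measurableX.
  by apply: eq_bigr => l _; rewrite ((cga l).2 A mA).1.
have m1 : meq (mixP nu b1) (mixP l1 a1).
  move=> A mA; rewrite /mixP -/mu1 -(gm A mA).2 gE; last exact: measurableX.
  by apply: eq_bigr => l _; rewrite ((cga l).2 A mA).2.
have cw0 x : (\sum_(l | eqm (b0 l) x) nu l = \sum_(j | eqm (a0 j) x) l0 j)%R.
  exact: (class_weights hid snu s0 Ab0 A0 m0 x).
have cw1 x : (\sum_(l | eqm (b1 l) x) nu l = \sum_(k | eqm (a1 k) x) l1 k)%R.
  exact: (class_weights hid snu s1 Ab1 A1 m1 x).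
pose W0 j := (\sum_(j' | eqm (a0 j') (a0 j)) l0 j')%R.
pose W1 k := (\sum_(k' | eqm (a1 k') (a1 k)) l1 k')%R.
pose r0 l j := ((eqm (b0 l) (a0 j))%:R * (l0 j / W0 j))%R.
pose r1 l k := ((eqm (b1 l) (a1 k))%:R * (l1 k / W1 k))%R.
have [l00 _] := s0; have [l10 _] := s1.
have W0_ge0 j : (0 <= W0 j)%R by apply: sumr_ge0 => j' _; apply: l00.
have W1_ge0 k : (0 <= W1 k)%R by apply: sumr_ge0 => k' _; apply: l10.
have l0W0 j : (l0 j <= W0 j)%R.
  rewrite /W0 (bigD1 j) ?eqm_refl //= lerDl; apply: sumr_ge0 => j' _; apply: l00.
have l1W1 k : (l1 k <= W1 k)%R.
  rewrite /W1 (bigD1 k) ?eqm_refl //= lerDl; apply: sumr_ge0 => k' _; apply: l10.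
have r0_ge0 l j : (0 <= r0 l j)%R.
  by apply: mulr_ge0; [exact: ler0n|apply: divr_ge0].
have r1_ge0 l k : (0 <= r1 l k)%R.
  by apply: mulr_ge0; [exact: ler0n|apply: divr_ge0].
have r0_sum l : (0 < nu l)%R -> (\sum_j r0 l j = 1)%R.
  move=> hl.
  pose V := (\sum_(j | eqm (a0 j) (b0 l)) l0 j)%R.
  have V0 : (0 < V)%R.
    rewrite /V -cw0 (bigD1 l) ?eqm_refl //=.
    by apply: ltr_wpDr => //; apply: sumr_ge0 => l' _; apply: nu0.
  rewrite (eq_bigr (fun j => (eqm (b0 l) (a0 j))%:R * l0 j / V))%R; last first.
    move=> j _; rewrite /r0 -mulrA; case: (boolP (eqm (b0 l) (a0 j))) => h; last by rewrite !mul0r.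
    congr (_ * (_ / _))%R; rewrite /W0 /V; apply: eq_bigl => j'.
    by apply/idP/idP => hh; [exact: eqm_trans hh (eqm_sym h)|exact: eqm_trans hh h].
  rewrite -mulr_suml sum_indic (eq_bigl (fun j => eqm (a0 j) (b0 l))); last first.
    by move=> j; apply/idP/idP => /eqm_sym.
  by rewrite divff // lt0r_neq0.
have r1_sum l : (0 < nu l)%R -> (\sum_k r1 l k = 1)%R.
  move=> hl.
  pose V := (\sum_(k | eqm (a1 k) (b1 l)) l1 k)%R.
  have V0 : (0 < V)%R.
    rewrite /V -cw1 (bigD1 l) ?eqm_refl //=.
    by apply: ltr_wpDr => //; apply: sumr_ge0 => l' _; apply: nu0.
  rewrite (eq_bigr (fun k => (eqm (b1 l) (a1 k))%:R * l1 k / V))%R; last first.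
    move=> k _; rewrite /r1 -mulrA; case: (boolP (eqm (b1 l) (a1 k))) => h; last by rewrite !mul0r.
    congr (_ * (_ / _))%R; rewrite /W1 /V; apply: eq_bigl => k'.
    by apply/idP/idP => hh; [exact: eqm_trans hh (eqm_sym h)|exact: eqm_trans hh h].
  rewrite -mulr_suml sum_indic (eq_bigl (fun k => eqm (a1 k) (b1 l))); last first.
    by move=> k; apply/idP/idP => /eqm_sym.
  by rewrite divff // lt0r_neq0.
have nu_cases l : nu l = 0%R \/ (0 < nu l)%R.
  by have := nu0 l; rewrite le_eqVlt => /orP[/eqP <-|->]; [left|right].
pose co l j k := (nu l * r0 l j * r1 l k)%R.
have co_ge0 l j k : (0 <= co l j k)%R.
  by rewrite /co; apply: mulr_ge0; [apply: mulr_ge0|].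
have co_sum l : (\sum_j \sum_k co l j k = nu l)%R.
  rewrite /co; under eq_bigr do rewrite -mulr_sumr.
  case: (nu_cases l) => [->|hl].
    by apply: big1 => j _; rewrite !mul0r.
  by under eq_bigr do rewrite r1_sum // mulr1; rewrite -mulr_sumr r0_sum // mulr1.
pose w : 'M[R]_(J, K) := \matrix_(j, k) (\sum_l co l j k)%R.
have wE j k : w j k = (\sum_l co l j k)%R by rewrite mxE.
have w0 j k : (0 <= w j k)%R by rewrite wE; apply: sumr_ge0 => l _.
have nu_r0 l j : (nu l * r0 l j * \sum_k r1 l k = nu l * r0 l j)%R.
  by case: (nu_cases l) => [->|hl]; [rewrite !mul0r|rewrite r1_sum // mulr1].
have nu_r1 l k : (nu l * (\sum_j r0 l j) * r1 l k = nu l * r1 l k)%R.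
  by case: (nu_cases l) => [->|hl]; [rewrite !mul0r|rewrite r0_sum // mulr1].
have feas : disc_feasible l0 l1 w.
  split => //.
  - move=> j; under eq_bigr do rewrite wE.
    rewrite exchange_big /=.
    under eq_bigr do rewrite /co -mulr_sumr nu_r0 /r0 mulrA.
    rewrite -mulr_suml (eq_bigr (fun l => (eqm (b0 l) (a0 j))%:R * nu l))%R; last first.
      by move=> l _; rewrite mulrC.
    rewrite sum_indic cw0 -/(W0 j).
    have [e|hW] := eqVneq (W0 j) 0%R.
      have h0 : l0 j = 0%R by have := l0W0 j; have := l00 j; lra.
      by rewrite h0 mul0r mulr0.
    by rewrite mulrC divfK.
  - move=> k; under eq_bigr do rewrite wE.
    rewrite exchange_big /=.
    under eq_bigr do rewrite /co -mulr_suml -mulr_sumr nu_r1 /r1 mulrA.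
    rewrite -mulr_suml (eq_bigr (fun l => (eqm (b1 l) (a1 k))%:R * nu l))%R; last first.
      by move=> l _; rewrite mulrC.
    rewrite sum_indic cw1 -/(W1 k).
    have [e|hW] := eqVneq (W1 k) 0%R.
      have h0 : l1 k = 0%R by have := l1W1 k; have := l10 k; lra.
      by rewrite h0 mul0r mulr0.
    by rewrite mulrC divfK.
have big3 (h : 'I_L -> \bar R) : (forall l, 0 <= h l) ->
    \sum_j \sum_k \sum_l (co l j k)%:E * h l = \sum_l (nu l)%:E * h l.
  move=> h0.
  under eq_bigr do rewrite exchange_big.
  rewrite exchange_big; apply: eq_bigr => l _.
  rewrite -co_sum -sumEFin ge0_sume_distrl; last first.
    by move=> j _; rewrite lee_fin; apply: sumr_ge0 => k _.
  apply: eq_bigr => j _; rewrite -sumEFin ge0_sume_distrl // => k _.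
  by rewrite lee_fin.
have obj : disc_obj Omega c p a0 a1 w =
    \sum_l (nu l)%:E * Wpp Omega c p (b0 l) (b1 l).
  rewrite -big3; last by move=> l; apply: Wpp_ge0.
  rewrite /disc_obj; apply: eq_bigr => j _; apply: eq_bigr => k _.
  rewrite Wp_pow wE -sumEFin ge0_sume_distrl; last by move=> l _; rewrite lee_fin.
  apply: eq_bigr => l _.
  case: (boolP (eqm (b0 l) (a0 j))) => h0; last first.
    by rewrite /co /r0 (negbTE h0) /= !(mul0r, mulr0, mul0e).
  case: (boolP (eqm (b1 l) (a1 k))) => h1; last first.
    by rewrite /co /r1 (negbTE h1) /= !(mul0r, mulr0, mul0e).
  congr (_ * _); apply: Wpp_meq; apply/eqmP; exact: eqm_sym.
have Wle l : Wpp Omega c p (b0 l) (b1 l) <= cost Omega c p (ga l).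
  by apply: ereal_inf_lbound; exists (ga l).
have le_obj : disc_obj Omega c p a0 a1 w <= cost Omega c p g.
  rewrite obj (cost_mix p mO mc nu0 gE).
  by apply: lee_sum => l _; apply: lee_wpmul2l; [rewrite lee_fin|].
exists w; split => // hle hfin.
have eqs : forall l, (nu l)%:E * Wpp Omega c p (b0 l) (b1 l) =
                     (nu l)%:E * cost Omega c p (ga l).
  apply: sum_eq_termwise.
  - by move=> l; rewrite mule_ge0 ?lee_fin // Wpp_ge0.
  - by move=> l; apply: lee_wpmul2l; [rewrite lee_fin|].
  - by rewrite -(cost_mix p mO mc nu0 gE).
  - by rewrite -(cost_mix p mO mc nu0 gE) -obj.
have optl l : (0 < nu l)%R -> opt_plans Omega c p (b0 l) (b1 l) (ga l).
  move=> hl; split => //; apply/esym; exact: EFin_cancel hl (eqs l).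
have hgs : forall q : 'I_J * 'I_K, exists gq,
    (opt_plans Omega c p (a0 q.1) (a1 q.2) gq /\
    (w q.1 q.2 != 0%R ->
     meq gq (fun A => \sum_l ((co l q.1 q.2 / w q.1 q.2)%R)%:E * ga l A)))%type.
  move=> [j k] /=.
  case: (boolP (w j k == 0%R)) => [/eqP hw|hw].
    by have [gq hq] := hopt (A0 j) (A1 k); exists gq; split => //.
  have tpos l : (0 <= co l j k / w j k)%R by apply: divr_ge0.
  have tsum : (\sum_l co l j k / w j k = 1)%R by rewrite -mulr_suml -wE divff.
  have [gq hq] := mix_exists ga tpos tsum.
  exists gq; split; last by move=> _ A _; rewrite hq.
  apply: (mix_opt mO mc tpos tsum _ (fun A _ => hq A)) => l hl.
  have hco : co l j k != 0%R.
    by apply: contraTneq hl => ->; rewrite mul0r ltxx.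
  case: (nu_cases l) => [hn|hn].
    by move: hco; rewrite /co hn !mul0r eqxx.
  case: (boolP (eqm (b0 l) (a0 j))) => h0; last first.
    by move: hco; rewrite /co /r0 (negbTE h0) /= !(mul0r, mulr0) eqxx.
  case: (boolP (eqm (b1 l) (a1 k))) => h1; last first.
    by move: hco; rewrite /co /r1 (negbTE h1) /= !(mul0r, mulr0) eqxx.
  by apply: (opt_meq _ _ (optl l hn)); apply/eqmP.
have [f hf] := choice hgs.
exists (fun j k => f (j, k)); split; first by move=> j k; exact: (hf (j, k)).1.
move=> A mA.
rewrite gE // /mix.
have hA l : 0 <= ga l A by apply: measure_ge0.
rewrite -(big3 (fun l => ga l A)) //.
apply: eq_bigr => j _; apply: eq_bigr => k _.
case: (boolP (w j k == 0%R)) => [/eqP hw|hw].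
  rewrite hw mul0e; apply: big1 => l _.
  have hz : co l j k = 0%R.
    apply: (psumr_eq0P (P := xpredT) (F := fun l => co l j k)) => //.
    by rewrite -wE.
  by rewrite hz mul0e.
rewrite ((hf (j, k)).2 hw A mA) /= ge0_sume_distrr; last first.
  by move=> l _; rewrite mule_ge0 // lee_fin divr_ge0.
by apply: eq_bigr => l _; rewrite muleA -EFinM mulrC divfK.
Qed.

Lemma dM_fin : dM_pp Omega c p l0 a0 l1 a1 < +oo.
Proof.
pose w : 'M[R]_(J, K) := \matrix_(j, k) (l0 j * l1 k)%R.
have [l00 l01] := s0; have [l10 l11] := s1.
have hw : disc_feasible l0 l1 w.
  split.
  - by move=> j k; rewrite mxE; apply: mulr_ge0.
  - by move=> j; under eq_bigr do rewrite mxE; rewrite -mulr_sumr l11 mulr1.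
  - by move=> k; under eq_bigr do rewrite mxE; rewrite -mulr_suml l01 mul1r.
apply: (le_lt_trans (y := disc_obj Omega c p a0 a1 w)).
  by apply: ereal_inf_lbound; exists w.
apply: lte_sum_pinfty => j _; apply: lte_sum_pinfty => k _.
apply: lte_mul_pinfty; [by rewrite lee_fin mxE mulr_ge0|by []|].
rewrite Wp_pow; apply: (Wpp_fin mO mc hmet); last by apply: hP.
- by have := p1; lra.
- by apply: hP.
Qed.

Theorem main_gen :
  dtilde Omega c p Aset G mu0 mu1 = dM Omega c p l0 a0 l1 a1 /\
  (forall g : probability (T * T)%type R,
     dtilde_minimizer Omega c p Aset G mu0 mu1 g <->
     exists w : 'M[R]_(J, K),
       disc_minimizer Omega c p l0 a0 l1 a1 w /\
       exists gs : 'I_J -> 'I_K -> probability (T * T)%type R,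
         (forall j k, opt_plans Omega c p (a0 j) (a1 k) (gs j k)) /\
         meq g (fun A => (\sum_(j < J) \sum_(k < K)
                             (w j k)%:E * gs j k A)%E)).
Proof.
have eqpp : dtilde_pp Omega c p Aset G mu0 mu1 = dM_pp Omega c p l0 a0 l1 a1.
  apply/le_anti/andP; split.
  - apply: le_ereal_inf_tmp => y [w hw <-].
    have [g [hc hg hcost]] := upper hw.
    rewrite -hcost; apply: ereal_inf_lbound; exists g => //.
  - apply: le_ereal_inf_tmp => y [g [hc hg] <-].
    have [w [hw hle _]] := decompose hc hg.
    apply: le_trans hle; apply: ereal_inf_lbound; by exists w.
split; first by rewrite /dtilde /dM eqpp.
move=> g; split.
- move=> [hc hg hcost].
  have [w [hw hle hmin]] := decompose hc hg.
  have dMle : dM_pp Omega c p l0 a0 l1 a1 <= disc_obj Omega c p a0 a1 w.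
    by apply: ereal_inf_lbound; exists w.
  have e1 : cost Omega c p g = dM_pp Omega c p l0 a0 l1 a1 by rewrite hcost eqpp.
  have hobj : disc_obj Omega c p a0 a1 w = dM_pp Omega c p l0 a0 l1 a1.
    by apply/le_anti; rewrite dMle andbT -e1.
  exists w; split; first by split.
  by apply: hmin; rewrite e1 ?hobj //; exact: dM_fin.
- move=> [w [[hw hobj] [gs [hgs gE]]]].
  have [hc hg hcost] := plan_from hw hgs gE.
  by split => //; rewrite hcost hobj eqpp.
Qed.

End Main.

Unset Implicit Arguments.
Set Strict Implicit.

Theorem mainTheorem3 (R : realType) (d : nat) (Omega : set (Rd R d))
  (p : R) (c : Rd R d -> Rd R d -> R)
  (Aset : set (probability (Rd R d) R))
  (G : probability (Rd R d) R -> probability (Rd R d) R ->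
       set (probability (Rd R d * Rd R d)%type R))
  (J K : nat) (l0 : 'I_J -> R) (a0 : 'I_J -> probability (Rd R d) R)
  (l1 : 'I_K -> R) (a1 : 'I_K -> probability (Rd R d) R) :
  measurable Omega ->
  1 < p ->
  metric_on Omega c ->
  measurable_fun (Omega `*` Omega) (fun z : Rd R d * Rd R d => c z.1 z.2) ->
  Aset `<=` Pcp Omega c p ->
  (forall b0 b1, Aset b0 -> Aset b1 ->
     exists g, opt_plans Omega c p b0 b1 g) ->
  identifiable Aset ->
  admissible Omega c p Aset G ->
  simplex l0 -> (forall j, Aset (a0 j)) ->
  simplex l1 -> (forall k, Aset (a1 k)) ->
  let mu0 := mix l0 (fun j => a0 j : set (Rd R d) -> \bar R) in
  let mu1 := mix l1 (fun k => a1 k : set (Rd R d) -> \bar R) in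
  dtilde Omega c p Aset G mu0 mu1 = dM Omega c p l0 a0 l1 a1 /\
  (forall g : probability (Rd R d * Rd R d)%type R,
     dtilde_minimizer Omega c p Aset G mu0 mu1 g <->
     exists w : 'M[R]_(J, K),
       disc_minimizer Omega c p l0 a0 l1 a1 w /\
       exists gs : 'I_J -> 'I_K -> probability (Rd R d * Rd R d)%type R,
         (forall j k, opt_plans Omega c p (a0 j) (a1 k) (gs j k)) /\
         meq g (fun A => (\sum_(j < J) \sum_(k < K)
                             (w j k)%:E * gs j k A)%E)).
Proof.
move=> mO p1 hmet mc hP hopt hid hadm s0 A0 s1 A1 mu0 mu1.
exact: (main_gen mO p1 hmet mc hP hopt hid hadm s0 A0 s1 A1).
Qed.
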